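(* Let $U$ and $\widetilde{U}$ be as defined in the context, let $a\in\mathbb{N}_1$ and $l\in\mathbb{N}_1$ with $U^l(a)=a$. Then for every $x\in\mathbb{R}_0$ the following are equivalent: (i) the parity sequence $\mathcal{P}_{\widetilde U}(x)=(\lfloor \widetilde U^i(x)\rfloor \bmod 2)_{i\ge 0}$ is eventually periodic with period $\tilde s=(1-(a\bmod 2),\,1-(U(a)\bmod 2),\dots,1-(U^{l-1}(a)\bmod 2))$, i.e. there is $j\in\mathbb{N}_0$ such that $(\lfloor \widetilde U^{i}(x)\rfloor\bmod 2,\dots,\lfloor \widetilde U^{i+l-1}(x)\rfloor\bmod 2)=\tilde s$ for all $i=j+ml$, $m\in\mathbb{N}_0$; (ii) $\mathcal{T}_{\widetilde U}(x)$ tends to $\{U^t(a)\}$ from below, i.e. there is $j_0\in\mathbb{N}_0$ such that for every $j\in\{0,1,\dots,l-1\}$ the sequence $\big(\widetilde U^{kl}(\widetilde U^{j+j_0}(x))\big)_{k\ge 0}$ converges to $U^j(a)$ as $k\to\infty$ and all of its terms are strictly less than $U^j(a)$.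
   Context: $\mathbb{R}_0=\{x\ge0\}$, $\mathbb{R}_1=\{x\ge1\}$, $\mathbb{N}_0=\{0,1,2,\dots\}$, $\mathbb{N}_1=\{1,2,\dots\}$, $\lfloor x\rfloor$ is the floor. $U:\mathbb{R}_1\to\mathbb{R}_1$: $U(x)=x/2$ if $\lfloor x\rfloor$ even, $U(x)=(3x+1)/2$ if $\lfloor x\rfloor$ odd. $\widetilde U:\mathbb{R}_0\to\mathbb{R}_0$: $\widetilde U(x)=(3x+1)/2$ if $\lfloor x\rfloor$ even, $\widetilde U(x)=x/2$ if $\lfloor x\rfloor$ odd. Iterates: $f^0=\mathrm{id}$, $f^i=f\circ f^{i-1}$; $\mathcal{T}_f(x)=(f^i(x))_{i\ge0}$. *)

(* Defs.v *)
From Stdlib Require Import Reals ZArith Lra.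
Open Scope R_scope.

(* floor x = Int_part x (Stdlib: Int_part x = up x - 1, the floor). *)
Definition floorZ (x : R) : Z := Int_part x.

Definition Ucol (x : R) : R :=
  if Z.even (floorZ x) then x / 2 else (3 * x + 1) / 2.

Definition Ut (x : R) : R :=
  if Z.even (floorZ x) then (3 * x + 1) / 2 else x / 2.

Definition itR (f : R -> R) (n : nat) (x : R) : R := Nat.iter n f x.

Definition par (y : R) : Z := (floorZ y mod 2)%Z.

(* Main.v *)
Require Import Defs.
From Stdlib Require Import Reals ZArith Lra Lia.
Open Scope R_scope.

Lemma floor_IZR (n : Z) (y : R) : IZR n <= y < IZR n + 1 -> floorZ y = n.
Proof. intros H. unfold floorZ. symmetry. apply Int_part_spec. lra. Qed.

Lemma par_IZR (n : Z) : par (IZR n) = (n mod 2)%Z.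
Proof. unfold par. rewrite (floor_IZR n); [reflexivity|lra]. Qed.

Definition uz (n : Z) : Z := if Z.even n then (n / 2)%Z else ((3 * n + 1) / 2)%Z.

Definition A (e : bool) (y : R) : R := if e then y / 2 else (3 * y + 1) / 2.
Definition f (e : bool) : R := if e then / 2 else 3 / 2.

Lemma A_diff e y z : A e y - A e z = f e * (y - z).
Proof. destruct e; unfold A, f; lra. Qed.

Lemma A_ge e y : A e y >= f e * y.
Proof. destruct e; unfold A, f; lra. Qed.

Lemma f_pos e : 0 < f e.
Proof. destruct e; unfold f; lra. Qed.

Lemma Ucol_IZR (n : Z) : (1 <= n)%Z ->
  Ucol (IZR n) = IZR (uz n) /\ Ucol (IZR n) = A (Z.even n) (IZR n) /\ (1 <= uz n)%Z.
Proof.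
  intros Hn. unfold Ucol, uz, A. rewrite (floor_IZR n) by lra.
  destruct (Z.even n) eqn:He.
  - apply Z.even_spec in He. destruct He as [k Hk]. subst n.
    replace (2 * k / 2)%Z with k by (rewrite Z.mul_comm, Z.div_mul; lia).
    rewrite mult_IZR. repeat split; try lra; lia.
  - assert (Ho : Z.odd n = true) by (rewrite <- Z.negb_even, He; reflexivity).
    apply Z.odd_spec in Ho. destruct Ho as [k Hk]. subst n.
    replace ((3 * (2 * k + 1) + 1) / 2)%Z with (3 * k + 2)%Z.
    2:{ replace (3 * (2 * k + 1) + 1)%Z with ((3*k+2) * 2)%Z by ring. rewrite Z.div_mul; lia. }
    rewrite plus_IZR, !mult_IZR, plus_IZR, mult_IZR. repeat split; try lra; lia.
Qed.

Section S.
Variable a l : nat.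
Hypothesis ha : (1 <= a)%nat.
Hypothesis hl : (1 <= l)%nat.
Hypothesis hper : itR Ucol l (INR a) = INR a.

Definition nr (r : nat) : Z := Nat.iter r uz (Z.of_nat a).

Lemma ar (r : nat) : itR Ucol r (INR a) = IZR (nr r) /\ (1 <= nr r)%Z.
Proof.
  induction r as [|r IH].
  - simpl. rewrite INR_IZR_INZ. split; [reflexivity|lia].
  - destruct IH as [H1 H2]. change (itR Ucol (S r) (INR a)) with (Ucol (itR Ucol r (INR a))).
    rewrite H1. destruct (Ucol_IZR _ H2) as [E1 [_ E3]]. rewrite E1. split; [reflexivity|exact E3].
Qed.

Definition E (r : nat) : bool := Z.even (nr r).

Fixpoint Lam (r : nat) : R := match r with O => 1 | S r' => f (E r') * Lam r' end.

Lemma Lam_pos r : 0 < Lam r.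
Proof. induction r; simpl. lra. pose proof (f_pos (E r)). nra. Qed.

Lemma nrS r : IZR (nr (S r)) = A (E r) (IZR (nr r)).
Proof.
  destruct (ar r) as [_ H2]. destruct (Ucol_IZR _ H2) as [E1 [E2 _]].
  change (nr (S r)) with (uz (nr r)). rewrite <- E1, E2. reflexivity.
Qed.

Lemma nr_l : IZR (nr l) = IZR (nr 0).
Proof.
  destruct (ar l) as [H1 _]. rewrite <- H1, hper. simpl. apply INR_IZR_INZ.
Qed.

Lemma Lam_le r : IZR (nr r) >= Lam r * IZR (nr 0).
Proof.
  induction r; cbn [Lam]. lra.
  rewrite nrS. pose proof (A_ge (E r) (IZR (nr r))). pose proof (f_pos (E r)).
  assert (f (E r) * IZR (nr r) >= f (E r) * (Lam r * IZR (nr 0))) by nra. nra.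
Qed.

Fixpoint cc (r : nat) : Z := match r with O => 1%Z | S r' => if E r' then cc r' else (3 * cc r')%Z end.

Lemma cc_eq r : Lam r * 2 ^ r = IZR (cc r).
Proof.
  induction r; cbn [Lam cc pow]. lra.
  destruct (E r); unfold f.
  - rewrite <- IHr. field.
  - rewrite mult_IZR, <- IHr. field.
Qed.

Lemma cc_odd r : Z.odd (cc r) = true.
Proof. induction r; cbn [cc]. reflexivity. destruct (E r). exact IHr. rewrite Z.odd_mul, IHr. reflexivity. Qed.

Lemma Lam_lt1 : Lam l < 1.
Proof.
  assert (Hle : Lam l <= 1).
  { pose proof (Lam_le l). rewrite nr_l in H. destruct (ar 0) as [_ H0].
    apply IZR_le in H0. nra. }
  destruct Hle as [|Heq]; [assumption|exfalso].
  pose proof (cc_eq l) as Hc. rewrite Heq in Hc.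
  destruct l as [|l'] eqn:El; [lia|].
  change (2 ^ S l') with (2 * 2 ^ l') in Hc. rewrite pow_IZR, <- mult_IZR, Rmult_1_l in Hc.
  apply eq_IZR in Hc. pose proof (cc_odd (S l')). rewrite <- Hc in H.
  rewrite Z.odd_mul in H. discriminate.
Qed.

End S.

Lemma itR_S g n y : itR g (S n) y = g (itR g n y).
Proof. reflexivity. Qed.

Lemma itR_add g p q y : itR g (p + q) y = itR g p (itR g q y).
Proof. unfold itR. apply Nat.iter_add. Qed.

Lemma Ut_par (y : R) (n : Z) : par y = (1 - par (IZR n))%Z -> Ut y = A (Z.even n) y.
Proof.
  rewrite par_IZR. unfold par, Ut, A. rewrite !Zmod_even.
  destruct (Z.even (floorZ y)), (Z.even n); simpl; intros H; try discriminate; reflexivity.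
Qed.

Lemma par_contra (y : R) (n : Z) : IZR n <= y < IZR n + 1 -> par y = (1 - par (IZR n))%Z -> False.
Proof.
  intros H1 H2. unfold par in H2 at 1. rewrite (floor_IZR n y H1), par_IZR in H2.
  pose proof (Z.mod_pos_bound n 2). lia.
Qed.



Theorem proposition2 (a l : nat) (ha : (1 <= a)%nat) (hl : (1 <= l)%nat)
  (hper : itR Ucol l (INR a) = INR a) (x : R) (hx : 0 <= x) :
  (exists j : nat, forall m r : nat, (r < l)%nat ->
      par (itR Ut (j + m * l + r) x) = (1 - par (itR Ucol r (INR a)))%Z)
  <->
  (exists j0 : nat, forall j : nat, (j < l)%nat ->
      Un_cv (fun k => itR Ut (k * l) (itR Ut (j + j0) x)) (itR Ucol j (INR a)) /\
      (forall k : nat, itR Ut (k * l) (itR Ut (j + j0) x) < itR Ucol j (INR a))).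
Proof.
  split.
  - intros [j H].
    set (w := fun i => itR Ut i x).
    assert (H' : forall m r, (r < l)%nat -> par (w (j + m * l + r)%nat) = (1 - par (IZR (nr a r)))%Z).
    { intros m r Hr. rewrite <- (proj1 (ar a l ha hl r)). apply H; exact Hr. }
    assert (L2 : forall m r, (r <= l)%nat ->
      w (j + m * l + r)%nat - IZR (nr a r) = Lam a r * (w (j + m * l)%nat - IZR (nr a 0))).
    { intros m r. induction r as [|r IH]; intros Hr.
      - rewrite Nat.add_0_r. simpl. lra.
      - replace (j + m * l + S r)%nat with (S (j + m * l + r)) by lia.
        unfold w at 1. rewrite itR_S. fold (w (j + m * l + r)%nat).
        rewrite (Ut_par _ _ (H' m r ltac:(lia))). rewrite (nrS a l ha hl).
        rewrite A_diff. cbn [Lam]. rewrite IH by lia. unfold E. ring. }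
    set (lam := Lam a l). set (d := w j - IZR (nr a 0)).
    assert (L1 : forall m, w (j + m * l)%nat - IZR (nr a 0) = lam ^ m * d).
    { induction m.
      - rewrite Nat.mul_0_l, Nat.add_0_r, pow_O. unfold d. lra.
      - replace (j + S m * l)%nat with (j + m * l + l)%nat by lia.
        rewrite <- (nr_l a l ha hl hper). rewrite L2 by lia. rewrite IHm. cbn [pow]. unfold lam. ring. }
    assert (Hlam : 0 < lam < 1).
    { split. apply Lam_pos. apply (Lam_lt1 a l ha hl hper). }
    assert (Hd : d < 0).
    { destruct (Rlt_or_le d 0) as [|Hd]; [assumption|exfalso].
      destruct Hd as [Hd|Hd].
      - destruct (pow_lt_1_zero lam ltac:(rewrite Rabs_pos_eq; lra) (/ d) ltac:(apply Rinv_0_lt_compat; lra)) as [N HN].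
        specialize (HN N (le_n N)). rewrite Rabs_pos_eq in HN by (apply pow_le; lra).
        pose proof (pow_lt lam N ltac:(lra)).
        assert (lam ^ N * d < 1).
        { apply Rmult_lt_compat_r with (r := d) in HN; [|lra].
          rewrite Rinv_l in HN by lra. exact HN. }
        specialize (L1 N). apply (par_contra (w (j + N * l)%nat) (nr a 0)).
        + nra.
        + specialize (H' N 0%nat ltac:(lia)). rewrite Nat.add_0_r in H'. exact H'.
      - apply (par_contra (w j) (nr a 0)).
        + unfold d in Hd. lra.
        + specialize (H' 0%nat 0%nat ltac:(lia)). simpl in H'. rewrite !Nat.add_0_r in H'. exact H'. }
    exists j. intros jj Hjj.
    assert (Hz : forall k, itR Ut (k * l) (itR Ut (jj + j) x) =
       IZR (nr a jj) + Lam a jj * (lam ^ k * d)).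
    { intros k. rewrite <- itR_add. fold (w (k * l + (jj + j))%nat).
      replace (k * l + (jj + j))%nat with (j + k * l + jj)%nat by lia.
      rewrite <- L1. rewrite <- L2 by lia. ring. }
    rewrite (proj1 (ar a l ha hl jj)). pose proof (Lam_pos a jj) as HL. split.
    + intros eps Heps.
      destruct (pow_lt_1_zero lam ltac:(rewrite Rabs_pos_eq; lra) (eps / (Lam a jj * (- d)))) as [N HN].
      { apply Rdiv_lt_0_compat; nra. }
      exists N. intros n Hn. specialize (HN n Hn). unfold R_dist. rewrite Hz.
      rewrite Rabs_pos_eq in HN by (apply pow_le; lra).
      replace (IZR (nr a jj) + Lam a jj * (lam ^ n * d) - IZR (nr a jj)) with
        (- (Lam a jj * (-d) * lam ^ n)) by ring.
      rewrite Rabs_Ropp. pose proof (pow_lt lam n ltac:(lra)).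
      assert (HLd : 0 < Lam a jj * (-d)) by (apply Rmult_lt_0_compat; lra).
      rewrite Rabs_pos_eq by (apply Rlt_le, Rmult_lt_0_compat; assumption).
      apply Rmult_lt_compat_l with (r := Lam a jj * (-d)) in HN; [|nra].
      replace (Lam a jj * - d * (eps / (Lam a jj * - d))) with eps in HN by (field; lra).
      exact HN.
    + intros k. rewrite Hz. pose proof (pow_lt lam k ltac:(lra)).
      assert (0 < Lam a jj * lam ^ k) by (apply Rmult_lt_0_compat; assumption). nra.
  - intros [j0 H].
    set (z := fun r k => itR Ut (k * l) (itR Ut (r + j0) x)).
    assert (U : forall n, (n <= l)%nat -> exists K, forall r, (r < n)%nat -> forall k, (K <= k)%nat ->
        IZR (nr a r) - 1 < z r k).
    { induction n; intros Hn.
      - exists 0%nat. intros r Hr. lia.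
      - destruct (IHn ltac:(lia)) as [K1 HK1].
        destruct (H n ltac:(lia)) as [Hc _]. rewrite (proj1 (ar a l ha hl n)) in Hc.
        destruct (Hc 1 ltac:(lra)) as [K2 HK2].
        exists (Nat.max K1 K2). intros r Hr k Hk.
        destruct (Nat.eq_dec r n) as [->|Hne].
        + specialize (HK2 k ltac:(lia)). unfold R_dist in HK2. unfold z.
          apply Rabs_def2 in HK2. lra.
        + apply HK1; lia. }
    destruct (U l (le_n l)) as [K HK].
    exists (j0 + K * l)%nat. intros m r Hr.
    replace (j0 + K * l + m * l + r)%nat with ((K + m) * l + (r + j0))%nat by lia.
    rewrite itR_add. fold (z r (K + m)%nat).
    specialize (HK r Hr (K + m)%nat ltac:(lia)).
    destruct (H r Hr) as [_ Hlt]. specialize (Hlt (K + m)%nat). fold (z r (K+m)%nat) in Hlt.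
    rewrite (proj1 (ar a l ha hl r)) in *. rewrite par_IZR.
    unfold par. rewrite (floor_IZR (nr a r - 1)).
    + rewrite !Zmod_even, Z.even_sub. destruct (Z.even (nr a r)); reflexivity.
    + rewrite minus_IZR. lra.
Qed.
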